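(* Let $S$ be as in the context. For every path $p$ from the root to a leaf in $\mathcal{T}(S)$ there is exactly one node $\phi$ on $p$ such that (1) $\phi$ has a unique Weiner link, (2) every ancestor of $\phi$ on $p$ has multiple Weiner links, and (3) every node in the subtree rooted at $\phi$ has a unique Weiner link.
   Context: $\Sigma$ is a finite totally ordered alphabet containing a symbol $\$$ smaller than every other symbol. $S$ is a string of length $n\ge 2$ over $\Sigma$ whose last character is $\$$ and in which $\$$ occurs nowhere else. The rotations of $S$ are the $n$ strings $S[i..n]S[1..i-1]$, $i\in[1,n]$. The rotation-trie $\mathcal{T}(S)$ is the trie of the set of rotations of $S$ (a rooted tree with single-character edge labels, children of a node having distinct labels, ordered by increasing label). The label $l(\phi)$ of a node is the concatenation of edge labels on the root-to-$\phi$ path; leaves are the $n$ nodes with $|l(\phi)|=n$. A triple $(\phi,\varphi,c)$ with $\phi,\varphi$ nodes and $c\in\Sigma$ is a Weiner link of $\phi$ if $l(\varphi)=c\,l(\phi)$, or $|l(\phi)|=n$ and $l(\varphi)=c\,l(\phi)[1..n-1]$. A node $\phi$ has a unique Weiner link if all of its Weiner links have the same target node $\varphi$ (every node has at least one Weiner link); otherwise $\phi$ has multiple Weiner links. *)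

(* Defs.v *)
From HB Require Import structures.
From mathcomp Require Import all_boot all_order.
Set Implicit Arguments. Unset Strict Implicit. Unset Printing Implicit Defensive.
Import Order.TTheory.
Local Open Scope order_scope.

Section RotationTrie.
Variables (d : Order.disp_t) (A : finOrderType d).

(* The n rotations S[i..n]S[1..i-1], i in [1,n]  (rot i S, i in [0,n-1]). *)
Definition rotations (S : seq A) : seq (seq A) :=
  [seq rot i S | i <- iota 0 (size S)].

(* Nodes of the rotation-trie T(S) are identified with their labels l(phi):
   the prefixes (including the empty one = root) of the rotations of S. *)
Definition is_node (S : seq A) (w : seq A) : bool :=
  has (fun r => prefix w r) (rotations S).

Definition is_leaf (S : seq A) (w : seq A) : bool :=
  is_node S w && (size w == size S).

Definition weiner_link (S : seq A) (phi vphi : seq A) (c : A) : Prop :=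
  [/\ is_node S phi, is_node S vphi &
      (vphi = c :: phi \/
       (size phi = size S /\ vphi = c :: take (size S).-1 phi))].

Definition unique_weiner (S : seq A) (phi : seq A) : Prop :=
  forall v1 v2 c1 c2, weiner_link S phi v1 c1 -> weiner_link S phi v2 c2 -> v1 = v2.

Definition multiple_weiner (S : seq A) (phi : seq A) : Prop :=
  ~ unique_weiner S phi.

Definition valid_text (dollar : A) (S : seq A) : Prop :=
  [/\ (forall a : A, a != dollar -> dollar < a),
      (2 <= size S)%N,
      last dollar S = dollar & count_mem dollar S = 1%N].

End RotationTrie.

(* Main.v *)
Require Import Defs.
From mathcomp Require Import all_boot all_order.
From Stdlib Require Import ClassicalEpsilon.
From mathcomp Require Import zify.

Set Implicit Arguments. Unset Strict Implicit.
Section H.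
Variables (d : Order.disp_t) (A : finOrderType d).
Implicit Types (S phi psi w leaf v : seq A).

Lemma prefix_eq_size (s1 s2 : seq A) : prefix s1 s2 -> size s1 = size s2 -> s1 = s2.
Proof. by rewrite prefixE => /eqP E es; rewrite -E es take_size. Qed.

Lemma prefix_take_le (s1 s2 : seq A) k : prefix s1 s2 -> (size s1 <= k)%N -> prefix s1 (take k s2).
Proof. by rewrite !prefixE => /eqP E le; rewrite take_takel // E. Qed.

Lemma node_size S w : @is_node _ A S w -> (size w <= size S)%N.
Proof.
case/hasP=> r /mapP [i _ ->] /size_prefix; by rewrite size_rot.
Qed.

Lemma node_prefix S w w' : prefix w w' -> is_node S w' -> is_node S w.
Proof.
move=> p /hasP [r rin pr]; apply/hasP; exists r => //; exact: prefix_trans pr.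
Qed.

Lemma link_target S phi v c : weiner_link S phi v c ->
  v = if size phi == size S then c :: take (size S).-1 phi else c :: phi.
Proof.
case=> _ nv [E|[E1 E2]]; last by rewrite E1 eqxx.
have := node_size nv; rewrite E /= => h.
by rewrite ifN // neq_ltn h.
Qed.

Lemma mono S phi psi : prefix phi psi -> is_node S psi ->
  unique_weiner S phi -> unique_weiner S psi.
Proof.
move=> p npsi U.
have [eqs|neqs] := eqVneq (size phi) (size psi).
  by rewrite -(prefix_eq_size p eqs).
have lt : (size phi < size psi)%N by rewrite ltn_neqAle neqs size_prefix.
have le : (size phi <= (size S).-1)%N.
  have := node_size npsi; move: lt; case: (size S) => [|m] /=; lia.
have key v c : weiner_link S psi v c -> weiner_link S phi (c :: phi) c.
  move=> L; have [_ nv _] := L; split; first exact: node_prefix npsi.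
    apply: node_prefix nv; rewrite (link_target L); case: ifP => _ /=;
      rewrite eqxx /=; [exact: prefix_take_le | exact: p].
  by left.
move=> v1 v2 c1 c2 L1 L2.
have [] := U _ _ _ _ (key _ _ L1) (key _ _ L2) => ec.
by rewrite (link_target L1) (link_target L2) ec.
Qed.

Lemma leaf_unique S leaf : is_leaf S leaf -> unique_weiner S leaf.
Proof.
case/andP=> _ /eqP sl v1 v2 c1 c2 L1 L2.
have perm_of v c : weiner_link S leaf v c -> perm_eq v S.
  move=> L; have E := link_target L; have [_ nv _] := L.
  have hs := node_size nv; rewrite E /= in hs.
  case/hasP: nv => r /mapP [i _ ->] pr.
  have sv : size v = size S.
    move: hs; rewrite E sl eqxx /= size_take sl; case: (size S) => //= m; by rewrite ltnSn.
  by rewrite (prefix_eq_size pr) ?sv ?size_rot // perm_rot.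
have P1 := perm_of _ _ L1; have P2 := perm_of _ _ L2.
rewrite (link_target L1) in P1; rewrite (link_target L2) in P2.
rewrite sl eqxx in P1 P2.
have : perm_eq [:: c1] [:: c2].
  rewrite -(perm_cat2l (take (size S).-1 leaf)).
  rewrite perm_sym perm_catC /= (perm_trans P2) // perm_sym perm_catC /=.
  exact: P1.
move/perm_mem => /(_ c1); rewrite !inE eqxx => /esym/eqP ec.
by rewrite (link_target L1) (link_target L2) ec.
Qed.
End H.

Theorem mainTheorem4 (d : Order.disp_t) (A : finOrderType d) (dollar : A)
  (S : seq A) :
  valid_text dollar S ->
  forall leaf : seq A, is_leaf S leaf ->
  exists! phi : seq A,
    [/\ prefix phi leaf,
        unique_weiner S phi,
        (forall psi, prefix psi leaf -> (size psi < size phi)%N ->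
           multiple_weiner S psi) &
        (forall psi, is_node S psi -> prefix phi psi -> unique_weiner S psi)].
Proof.
move=> _ leaf Hl.
pose P k := if excluded_middle_informative (unique_weiner S (take k leaf)) then true else false.
have PE k : P k <-> unique_weiner S (take k leaf).
  by rewrite /P; case: excluded_middle_informative.
have sl : size leaf = size S by case/andP: Hl => _ /eqP.
have ex : exists k, P k.
  exists (size leaf); apply/PE; rewrite take_size; exact: leaf_unique.
case: (@ex_minnP P ex) => m /PE Pm minm.
have mle : (m <= size leaf)%N.
  apply: minm; apply/PE; rewrite take_size; exact: leaf_unique.
have sm : size (take m leaf) = m by rewrite size_takel.
have cond2 : forall psi, prefix psi leaf -> (size psi < m)%N -> multiple_weiner S psi.
  move=> psi pp lt U; move: pp; rewrite prefixE => /eqP E.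
  suff /minm : P (size psi) by rewrite leqNgt lt.
  apply/PE; by rewrite E.
exists (take m leaf); split.
  split => //; first exact: prefix_take.
    by rewrite sm.
  move=> psi npsi pp; exact: mono pp npsi Pm.
move=> phi' [pp' U' c2' _].
have [lt|gt|eq] := ltngtP (size phi') m.
- by case: (cond2 _ pp' lt).
- by case: (c2' _ (prefix_take _ _) _ Pm); rewrite sm.
- by move: pp'; rewrite prefixE eq => /eqP.
Qed.
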